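(* Let $U$ be a finite nonempty set, let $(T,I,N)$ be a residual triplet, and let $\widetilde{R}$ be a $T$-preorder relation on $U$. Let $u,v\in U$ and $\lambda_1,\lambda_2\in[0,1]$. Then the fuzzy granules $\widetilde{R}^+_{\lambda_1}(u)$ and $\widetilde{R}^-_{\lambda_2}(v)$ are $T$-disjoint if and only if $$T(\lambda_1,\lambda_2)\le N(\widetilde{R}(v,u)).$$
   Context: A residual triplet $(T,I,N)$ consists of a left-continuous $t$-norm $T$, its residual implicator $I(x,y)=\sup\{\beta\in[0,1]: T(x,\beta)\le y\}$, and the induced negator $N(x)=I(x,0)$. A fuzzy relation $\widetilde{R}:U\times U\to[0,1]$ is a $T$-preorder if it is reflexive ($\widetilde{R}(u,u)=1$) and $T$-transitive ($T(\widetilde{R}(u,v),\widetilde{R}(v,w))\le \widetilde{R}(u,w)$ for all $u,v,w$). For $u\in U$ and $\lambda\in[0,1]$, the granule $\widetilde{R}^+_\lambda(u)$ is the fuzzy set on $U$ with membership $w\mapsto T(\widetilde{R}(w,u),\lambda)$, and $\widetilde{R}^-_\lambda(u)$ is the fuzzy set with membership $w\mapsto T(\widetilde{R}(u,w),\lambda)$. Two fuzzy sets $A,B$ on $U$ are $T$-disjoint if $T(A(w),B(w))=0$ for every $w\in U$. *)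

(* Defs.v *)
From Stdlib Require Import Reals Lra List.
Open Scope R_scope.

Definition unit_iv (x : R) : Prop := 0 <= x <= 1.

Definition is_tnorm (T : R -> R -> R) : Prop :=
  (forall x y, unit_iv x -> unit_iv y -> unit_iv (T x y)) /\
  (forall x y, unit_iv x -> unit_iv y -> T x y = T y x) /\
  (forall x y z, unit_iv x -> unit_iv y -> unit_iv z ->
     T x (T y z) = T (T x y) z) /\
  (forall x y z, unit_iv x -> unit_iv y -> unit_iv z ->
     x <= y -> T x z <= T y z) /\
  (forall x, unit_iv x -> T x 1 = x).

(* Left-continuity (in the first argument; by commutativity, in both). *)
Definition left_continuous_tnorm (T : R -> R -> R) : Prop :=
  forall x y, 0 < x <= 1 -> unit_iv y ->
    forall eps, 0 < eps -> exists delta, 0 < delta /\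
      forall z, unit_iv z -> x - delta < z <= x ->
        Rabs (T z y - T x y) < eps.

Definition is_residual_implicator (T I : R -> R -> R) : Prop :=
  forall x y, unit_iv x -> unit_iv y ->
    is_lub (fun b => unit_iv b /\ T x b <= y) (I x y).

Definition residual_triplet (T I : R -> R -> R) (N : R -> R) : Prop :=
  is_tnorm T /\ left_continuous_tnorm T /\ is_residual_implicator T I /\
  (forall x, N x = I x 0).

Definition fuzzy_relation {U : Type} (Rel : U -> U -> R) : Prop :=
  forall u v, unit_iv (Rel u v).

Definition T_preorder {U : Type} (T : R -> R -> R) (Rel : U -> U -> R) : Prop :=
  fuzzy_relation Rel /\ (forall u, Rel u u = 1) /\
  (forall u v w, T (Rel u v) (Rel v w) <= Rel u w).

Definition granule_plus {U : Type} (T : R -> R -> R) (Rel : U -> U -> R)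
  (lam : R) (u : U) : U -> R := fun w => T (Rel w u) lam.

Definition granule_minus {U : Type} (T : R -> R -> R) (Rel : U -> U -> R)
  (lam : R) (u : U) : U -> R := fun w => T (Rel u w) lam.

Definition T_disjoint {U : Type} (T : R -> R -> R) (A B : U -> R) : Prop :=
  forall w, T (A w) (B w) = 0.

Definition finite_nonempty (U : Type) : Prop :=
  inhabited U /\ exists l : list U, forall x, In x l.

(* Main.v *)
Require Import Defs.
From Stdlib Require Import Reals Lra Classical.
Open Scope R_scope.

Lemma tn_zero T x : is_tnorm T -> unit_iv x -> T x 0 = 0.
Proof.
  intros [Hr [Hc [Ha [Hm Hn]]]] Hx.
  assert (U0 : unit_iv 0) by (unfold unit_iv; lra).
  assert (U1 : unit_iv 1) by (unfold unit_iv; lra).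
  assert (H1 : T x 0 <= T 1 0) by (apply Hm; auto; unfold unit_iv in *; lra).
  rewrite (Hc 1 0 U1 U0), (Hn 0 U0) in H1.
  pose proof (Hr x 0 Hx U0) as H2; unfold unit_iv in H2; lra.
Qed.

Lemma tn_mono2 T x y z : is_tnorm T -> unit_iv x -> unit_iv y -> unit_iv z ->
  y <= z -> T x y <= T x z.
Proof.
  intros Ht Hx Hy Hz Hyz. destruct Ht as [Hr [Hc [Ha [Hm Hn]]]].
  rewrite (Hc x y), (Hc x z); auto.
Qed.

Lemma resid T I x y b : is_tnorm T -> left_continuous_tnorm T ->
  is_residual_implicator T I -> unit_iv x -> unit_iv y -> unit_iv b ->
  b <= I x y -> T x b <= y.
Proof.
  intros Ht Hlc Hri Hx Hy Hb Hbc.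
  destruct (Hri x y Hx Hy) as [Hub Hleast].
  set (c := I x y) in *.
  assert (U0 : unit_iv 0) by (unfold unit_iv; lra).
  assert (U1 : unit_iv 1) by (unfold unit_iv; lra).
  assert (Hc0 : 0 <= c).
  { apply Hub. split; auto. rewrite tn_zero; auto. unfold unit_iv in Hy; lra. }
  assert (Hc1 : c <= 1).
  { apply Hleast. intros z [Hz _]. unfold unit_iv in Hz; lra. }
  assert (Uc : unit_iv c) by (unfold unit_iv; lra).
  assert (Hmain : T x c <= y).
  { destruct (Rle_or_lt (T x c) y) as [h|h]; [exact h|exfalso].
    destruct (Req_dec c 0) as [E|E].
    { rewrite E, tn_zero in h; auto. unfold unit_iv in Hy; lra. }
    destruct (Hlc c x ltac:(lra) Hx (T x c - y) ltac:(lra)) as [d [Hd Hz]].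
    set (z := Rmax 0 (c - d/2)).
    assert (Hz1 : 0 <= z) by apply Rmax_l.
    assert (Hz2 : c - d/2 <= z) by apply Rmax_r.
    assert (Hz3 : z < c).
    { unfold z, Rmax. destruct (Rle_dec 0 (c - d/2)); lra. }
    assert (Uz : unit_iv z) by (unfold unit_iv; lra).
    assert (Hex : exists b', (unit_iv b' /\ T x b' <= y) /\ z < b').
    { apply NNPP. intro Hne.
      assert (c <= z).
      { apply Hleast. intros w Hw. destruct (Rle_or_lt w z) as [h'|h']; auto.
        exfalso. apply Hne. exists w. auto. }
      lra. }
    destruct Hex as [b' [[Ub' Hb'] Hzb']].
    assert (Txz : T x z <= y).
    { eapply Rle_trans; [|exact Hb']. apply tn_mono2; auto; lra. }
    specialize (Hz z Uz ltac:(lra)).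
    destruct Ht as [Hr [Hcm [Ha [Hm Hn]]]].
    rewrite (Hcm z x), (Hcm c x) in Hz; auto.
    pose proof (Rabs_Ropp (T x z - T x c)). pose proof (Rle_abs (- (T x z - T x c))). lra. }
  eapply Rle_trans; [|exact Hmain]. apply tn_mono2; auto.
Qed.

Theorem proposition3 (U : Type) (T I : R -> R -> R) (N : R -> R)
  (Rel : U -> U -> R) (u v : U) (lam1 lam2 : R) :
  finite_nonempty U ->
  residual_triplet T I N ->
  T_preorder T Rel ->
  unit_iv lam1 -> unit_iv lam2 ->
  (T_disjoint T (granule_plus T Rel lam1 u) (granule_minus T Rel lam2 v)
   <-> T lam1 lam2 <= N (Rel v u)).
Proof.
  intros _ [Ht [Hlc [Hri HN]]] [Hfr [Hrefl Htr]] H1 H2.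
  pose proof Ht as Ht'.
  destruct Ht' as [Hr [Hc [Ha [Hm Hn]]]].
  assert (U0 : unit_iv 0) by (unfold unit_iv; lra).
  assert (U1 : unit_iv 1) by (unfold unit_iv; lra).
  assert (UL : unit_iv (T lam1 lam2)) by auto.
  unfold T_disjoint, granule_plus, granule_minus. rewrite HN.
  split.
  - intros Hd. specialize (Hd v). rewrite Hrefl in Hd.
    rewrite (Hc 1 lam2), Hn in Hd; auto.
    rewrite <- Ha in Hd; auto.
    destruct (Hri (Rel v u) 0 (Hfr v u) U0) as [Hub _].
    apply Hub. split; auto. lra.
  - intros Hle w.
    pose proof (resid T I (Rel v u) 0 (T lam1 lam2) Ht Hlc Hri (Hfr v u) U0 UL Hle) as Hz.
    assert (Ua := Hfr w u). assert (Ub := Hfr v w).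
    set (a := Rel w u) in *. set (b := Rel v w) in *.
    assert (E : T (T a lam1) (T b lam2) = T (T b a) (T lam1 lam2)).
    { rewrite <- (Ha a lam1); auto.
      rewrite (Ha lam1 b lam2); auto.
      rewrite (Hc lam1 b); auto.
      rewrite <- (Ha b lam1 lam2); auto.
      rewrite (Ha a b); auto.
      rewrite (Hc a b); auto. }
    rewrite E.
    assert (T (T b a) (T lam1 lam2) <= T (Rel v u) (T lam1 lam2)).
    { apply Hm; auto. apply Htr. }
    pose proof (Hr (T b a) (T lam1 lam2) ltac:(auto) UL).
    unfold unit_iv in *; lra.
Qed.
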